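(* Fix a full realization $\mathbf{y}_{\mathcal{W}}$ of the profiles. The allocation policy of \textsc{SeqTGreedy} (defined in the context) is monotone: for every user $i$ and every fixed bids $b_{-i}$ of the other users, if $b'_i\le b_i$ and $i$ is selected when the bids are $(b_i,b_{-i})$, then $i$ is also selected when the bids are $(b'_i,b_{-i})$.
   Context: Setting. $\mathcal{V}$ is a finite set and $f:2^{\mathcal{V}}\to\mathbb{R}_{\ge0}$ is monotone and submodular. $\mathcal{W}$ is a finite set of users and $\mathcal{O}\subseteq 2^{\mathcal{V}}$. Each user $w$ has a random sensing profile $Y_w$ with values in $\mathcal{O}$; the $Y_w$ are independent with known distributions. For $\mathcal{S}\subseteq\mathcal{W}$ and values $y_s$, write $\mathbf{y}_{\mathcal{S}}=\{(s,y_s):s\in\mathcal{S}\}$ and $g(\mathbf{y}_{\mathcal{S}})=f(\bigcup_{s\in\mathcal{S}}y_s)$. The conditional expected marginal gain is $\Delta_g(w\mid\mathbf{y}_{\mathcal{S}})=\sum_{y\in\mathcal{O}}P(Y_w=y\mid\mathbf{y}_{\mathcal{S}})\,[g(\mathbf{y}_{\mathcal{S}}\cup\{(w,y)\})-g(\mathbf{y}_{\mathcal{S}})]$. Users report bids $b_w\ge 0$; budget $\mathcal{B}>0$, parameter $\alpha\ge1$. Allocation policy of \textsc{SeqTGreedy}. Set $\mathcal{S}=\emptyset$, $\mathbf{y}_{\mathcal{S}}=\emptyset$, $\mathcal{W}'=\mathcal{W}$. While $\mathcal{W}'\ne\emptyset$: let $w^*\in\arg\max_{w\in\mathcal{W}'}\Delta_g(w\mid\mathbf{y}_{\mathcal{S}})/b_w$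 and $\Delta_{w^*}=\Delta_g(w^*\mid\mathbf{y}_{\mathcal{S}})$. If $\sum_{s\in\mathcal{S}}b_s+b_{w^*}\le\mathcal{B}$: if moreover $b_{w^*}\le\frac{\mathcal{B}}{\alpha}\cdot\frac{\Delta_{w^*}}{\sum_{s\in\mathcal{S}}\Delta_s+\Delta_{w^*}}$ then add $w^*$ to $\mathcal{S}$ (recording $\Delta_{w^*}$), observe $y_{w^*}$ (its value in the fixed realization $\mathbf{y}_{\mathcal{W}}$), add $(w^*,y_{w^*})$ to $\mathbf{y}_{\mathcal{S}}$, remove $w^*$ from $\mathcal{W}'$; otherwise stop. If the budget test fails, remove $w^*$ from $\mathcal{W}'$. *)

(* Defs.v *)
From mathcomp Require Import all_boot all_order all_algebra.
Set Implicit Arguments. Unset Strict Implicit. Unset Printing Implicit Defensive.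
Import Order.TTheory GRing.Theory Num.Theory.
Local Open Scope ring_scope.

Section SeqTGreedy.
Variables (R : realFieldType) (V W : finType).

Definition set_fun_nonneg (f : {set V} -> R) := forall A, 0 <= f A.
Definition set_fun_monotone (f : {set V} -> R) :=
  forall A B : {set V}, A \subset B -> f A <= f B.
Definition set_fun_submodular (f : {set V} -> R) :=
  forall A B : {set V}, f (A :|: B) + f (A :&: B) <= f A + f B.

(* p w y = P(Y_w = y); the profile distribution of user w, supported on O *)
Definition is_profile_distr (O : {set {set V}}) (p : W -> {set V} -> R) :=
  forall w, (forall y, 0 <= p w y) /\ (forall y, y \notin O -> p w y = 0)
            /\ \sum_(y in O) p w y = 1.

Variables (f : {set V} -> R) (O : {set {set V}}) (p : W -> {set V} -> R)
          (yW : W -> {set V}).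

(* g(y_S) = f (union of y_s, s in S), profiles taken from the fixed
   realization yW *)
Definition g (S : {set W}) : {set V} := \bigcup_(s in S) yW s.

(* conditional expected marginal gain; by independence of the Y_w,
   P(Y_w = y | y_S) = P(Y_w = y) for w notin S *)
Definition cond_gain (w : W) (S : {set W}) : R :=
  \sum_(y in O) p w y * (f (g S :|: y) - f (g S)).

Variables (rk : W -> nat) (* fixed tie-breaking priority for the argmax *)
          (budget alpha : R) (b : W -> R).

Definition ratio (S : {set W}) (w : W) : R := cond_gain w S / b w.

Definition beats (S : {set W}) (w v : W) : bool :=
  (ratio S v < ratio S w) || ((ratio S v == ratio S w) && (rk w <= rk v)%N).

Definition argmax_user (S : {set W}) (W' : {set W}) : option W :=
  [pick w in W' | [forall v in W', beats S w v]].

(* state: selected set S, sum of recorded Delta_s, remaining W', stopped *)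
Record state := State { sel : {set W}; sumD : R; rem : {set W}; stopped : bool }.

Definition step (st : state) : state :=
  if stopped st then st else
  match argmax_user (sel st) (rem st) with
  | None => State (sel st) (sumD st) (rem st) true
  | Some w =>
      let D := cond_gain w (sel st) in
      if \sum_(s in sel st) b s + b w <= budget then
        if b w <= budget / alpha * (D / (sumD st + D)) then
          State (w |: sel st) (sumD st + D) (rem st :\ w) false
        else State (sel st) (sumD st) (rem st) true
      else State (sel st) (sumD st) (rem st :\ w) false
  end.

(* each non-final step removes one user from W', so #|W|.+1 iterations
   reach the final state *)
Definition seqtgreedy_selected : {set W} :=
  sel (iter #|W|.+1 step (State set0 0 [set: W] false)).

End SeqTGreedy.

Definition update_bid (W : finType) (R : Type) (b : W -> R) (i : W) (bi : R) : W -> R :=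
  fun w => if w == i then bi else b w.

(* Main.v *)
Require Import Defs.
From mathcomp Require Import all_boot all_order all_algebra.
From mathcomp Require Import lra.
Import Order.TTheory GRing.Theory Num.Theory.
Local Open Scope ring_scope.

Definition BB {R : realFieldType} {T : finType} (r : T -> R) (rk : T -> nat) (x y : T) : bool :=
  (r y < r x) || ((r y == r x) && (rk x <= rk y)%N).

Lemma BB_total (R : realFieldType) (T : finType) (r : T -> R) (rk : T -> nat) (x y : T) : BB r rk x y || BB r rk y x.
Proof.
rewrite /BB; case: (ltgtP (r y) (r x)) => [h|h|h] /=.
all: try by rewrite ?h ?orbT.
by rewrite leq_total.
Qed.

Lemma BB_trans (R : realFieldType) (T : finType) (r : T -> R) (rk : T -> nat) (x y z : T) : BB r rk x y -> BB r rk y z -> BB r rk x z.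
Proof.
rewrite /BB => /orP[h1|/andP[/eqP e1 h1]] /orP[h2|/andP[/eqP e2 h2]].
- by rewrite (lt_trans h2 h1).
- by rewrite e2 h1.
- by rewrite -e1 h2.
- by rewrite e2 e1 eqxx (leq_trans h1 h2) orbT.
Qed.

Lemma BB_anti (R : realFieldType) (T : finType) (r : T -> R) (rk : T -> nat) (x y : T) : injective rk -> BB r rk x y -> BB r rk y x -> x = y.
Proof.
move=> inj; rewrite /BB => /orP[h1|/andP[/eqP e1 h1]] /orP[h2|/andP[/eqP e2 h2]].
- by move: (lt_trans h1 h2); rewrite ltxx.
- by move: h1; rewrite e2 ltxx.
- by move: h2; rewrite e1 ltxx.
- by apply: inj; apply/eqP; rewrite eqn_leq h1 h2.
Qed.

Lemma BB_refl (R : realFieldType) (T : finType) (r : T -> R) (rk : T -> nat) (x : T) : BB r rk x x.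
Proof. by rewrite /BB eqxx leqnn orbT. Qed.

Lemma cg_ge0 (R : realFieldType) (V W : finType) (f : {set V} -> R) O p (yW : W -> {set V}) :
  set_fun_monotone f -> is_profile_distr O p ->
  forall w S, 0 <= cond_gain f O p yW w S.
Proof.
move=> fm hp w S; rewrite /cond_gain; apply: sumr_ge0 => y _.
have [p0 _] := hp w; apply: mulr_ge0 => //; rewrite subr_ge0; apply: fm; exact: subsetUl.
Qed.

Lemma cg_anti (R : realFieldType) (V W : finType) (f : {set V} -> R) O p (yW : W -> {set V}) :
  set_fun_monotone f -> set_fun_submodular f -> is_profile_distr O p ->
  forall w (S S1 : {set W}), S \subset S1 -> cond_gain f O p yW w S1 <= cond_gain f O p yW w S.
Proof.
move=> fm fs hp w S S1 sub; rewrite /cond_gain; apply: ler_sum => y _.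
have [p0 _] := hp w; apply: ler_wpM2l => //.
have gsub : g yW S \subset g yW S1.
  apply/bigcupsP => s sS; rewrite /g; apply: (bigcup_sup s); exact: (subsetP sub).
set A := g yW S; set B := g yW S1.
have h1 := fs (A :|: y) B.
have e1 : A :|: y :|: B = B :|: y.
  by rewrite setUAC (setUidPr gsub).
have h2 : f A <= f ((A :|: y) :&: B).
  apply: fm; rewrite subsetI subsetUl gsub //.
rewrite e1 in h1; lra.
Qed.

Lemma BB_up (R : realFieldType) (T : finType) (r r' : T -> R) (rk : T -> nat) (u v : T) :
  r u <= r' u -> r' v = r v -> BB r rk u v -> BB r' rk u v.
Proof.
move=> hu hv; rewrite /BB hv => /orP[h|/andP[/eqP e h]].
  by rewrite (lt_le_trans h hu).
move: hu; rewrite le_eqVlt => /orP[/eqP <-|hlt]; first by rewrite e eqxx h orbT.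
by rewrite e hlt.
Qed.

Lemma BB_down (R : realFieldType) (T : finType) (r r' : T -> R) (rk : T -> nat) (u v : T) :
  r v <= r' v -> r' u = r u -> BB r' rk u v -> BB r rk u v.
Proof.
move=> hv hu; rewrite /BB hu => /orP[h|/andP[/eqP e h]].
  by rewrite (le_lt_trans hv h).
move: hv; rewrite le_eqVlt => /orP[/eqP ->|hlt]; first by rewrite e eqxx h orbT.
by rewrite -e hlt.
Qed.

Lemma transfer (R : realFieldType) (c bi D D1 s s1 : R) :
  0 < c -> 0 < bi -> 0 <= D1 -> D1 <= D -> 0 <= s -> s <= s1 ->
  bi <= c * (D1 / (s1 + D1)) -> bi <= c * (D / (s + D)).
Proof.
move=> c0 b0 d10 d1d s0 ss1 h.
have D1p : 0 < D1.
  rewrite lt_neqAle d10 andbT; apply/negP => /eqP e; move: h; rewrite -e mul0r mulr0.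
  by rewrite leNgt b0.
apply: (le_trans h); apply: ler_wpM2l; first exact: ltW.
have p1 : 0 < s1 + D1 by lra.
have p2 : 0 < s + D by lra.
rewrite ler_pdivrMr // mulrAC ler_pdivlMr //; nra.
Qed.

Lemma iter_stopped (R : realFieldType) (V W : finType) (f : {set V} -> R) O p (yW : W -> {set V}) (rk : W -> nat) (budget alpha : R) (b : W -> R) n st :
  stopped st -> iter n (step f O p yW rk budget alpha b) st = st.
Proof.
move=> hs; elim: n => //= n ->; by rewrite /step hs.
Qed.

Lemma step_sel_sub (R : realFieldType) (V W : finType) (f : {set V} -> R) O p (yW : W -> {set V}) (rk : W -> nat) (budget alpha : R) (b : W -> R) st :
  sel st \subset sel (step f O p yW rk budget alpha b st).
Proof.
rewrite /step; case: (stopped st) => //; case: argmax_user => [w|] //=.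
case: ifP => _ //; case: ifP => _ //=; exact: subsetUr.
Qed.

Lemma iter_sel_sub (R : realFieldType) (V W : finType) (f : {set V} -> R) O p (yW : W -> {set V}) (rk : W -> nat) (budget alpha : R) (b : W -> R) n st :
  sel st \subset sel (iter n (step f O p yW rk budget alpha b) st).
Proof.
elim: n => //= n ih; apply: (subset_trans ih); exact: step_sel_sub.
Qed.

Lemma step_sumD (R : realFieldType) (V W : finType) (f : {set V} -> R) O p (yW : W -> {set V}) (rk : W -> nat) (budget alpha : R) (b : W -> R) st :
  set_fun_monotone f -> is_profile_distr O p ->
  sumD st <= sumD (step f O p yW rk budget alpha b st).
Proof.
move=> fm hp; rewrite /step; case: (stopped st) => //; case: argmax_user => [w|] //=.
case: ifP => _ //; case: ifP => _ //=; rewrite lerDl; exact: cg_ge0.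
Qed.

Lemma sum_sub (R : realFieldType) (W : finType) (b : W -> R) (A B : {set W}) :
  (forall w, 0 < b w) -> A \subset B -> \sum_(s in A) b s <= \sum_(s in B) b s.
Proof.
move=> bp sub; rewrite [X in _ <= X](big_setID A) /= (setIidPr sub) lerDl.
apply: sumr_ge0 => s _; exact: ltW.
Qed.

Lemma future (R : realFieldType) (V W : finType) (f : {set V} -> R) O p (yW : W -> {set V}) (rk : W -> nat) (budget alpha : R) (b : W -> R) i :
  set_fun_monotone f -> set_fun_submodular f -> is_profile_distr O p ->
  0 < budget -> 1 <= alpha -> (forall w, 0 < b w) ->
  forall n st, 0 <= sumD st -> i \notin sel st ->
  i \in sel (iter n (step f O p yW rk budget alpha b) st) ->
  \sum_(s in sel st) b s + b i <= budget /\
  b i <= budget / alpha * (cond_gain f O p yW i (sel st) / (sumD st + cond_gain f O p yW i (sel st))).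
Proof.
move=> fm fs hp bud al bp; elim=> [|n ih] st s0 ni; first by rewrite /= (negPf ni).
rewrite iterSr; set F := step _ _ _ _ _ _ _ _.
case hs: (stopped st).
  have -> : F st = st by rewrite /F /step hs.
  exact: ih.
have c0 : 0 < budget / alpha by apply: divr_gt0 => //; lra.
case ha: (argmax_user f O p yW rk b (sel st) (Defs.rem st)) => [w|]; last first.
  by rewrite /F /step hs ha iter_stopped //= (negPf ni).
case hb: (\sum_(s in sel st) b s + b w <= budget); last first.
  have -> : F st = State (sel st) (sumD st) (Defs.rem st :\ w) false by rewrite /F /step hs ha hb.
  exact: ih.
case hr: (b w <= budget / alpha * (cond_gain f O p yW w (sel st) / (sumD st + cond_gain f O p yW w (sel st)))); last first.
  by rewrite /F /step hs ha hb hr iter_stopped //= (negPf ni).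
have -> : F st = State (w |: sel st) (sumD st + cond_gain f O p yW w (sel st)) (Defs.rem st :\ w) false by rewrite /F /step hs ha hb hr.
case: (eqVneq i w) => [->|niw]; first by [].
have ni1 : i \notin w |: sel st by rewrite in_setU1 negb_or niw.
have s01 : 0 <= sumD st + cond_gain f O p yW w (sel st).
  by rewrite addr_ge0 // cg_ge0.
rewrite /F => hin; have [h1 h2] := ih (State _ _ _ _) s01 ni1 hin; split.
  apply: le_trans h1; rewrite lerD2r; apply: sum_sub => //; exact: subsetUr.
apply: (@transfer R _ _ _ _ _ _ c0 (bp i) _ _ s0 _ h2).
- exact: cg_ge0.
- apply: cg_anti => //; exact: subsetUr.
- by rewrite lerDl cg_ge0.
Qed.

Arguments iter_sel_sub {R V W f O p yW rk budget alpha b n st}.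
Arguments step_sumD {R V W f O p yW rk budget alpha b st}.
Arguments BB_total {R T} r rk x y.
Arguments BB_trans {R T r rk x y z}.
Arguments BB_anti {R T r rk x y}.
Arguments BB_refl {R T r rk x}.
Arguments BB_up {R T r r' rk u v}.
Arguments BB_down {R T r r' rk u v}.

Lemma key (R : realFieldType) (V W : finType) (f : {set V} -> R) O p (yW : W -> {set V}) (rk : W -> nat) (budget alpha : R) (b : W -> R) i (bi' : R) :
  set_fun_monotone f -> set_fun_submodular f -> is_profile_distr O p ->
  injective rk ->
  0 < budget -> 1 <= alpha -> (forall w, 0 < b w) -> 0 < bi' -> bi' <= b i ->
  forall n st, 0 <= sumD st -> i \notin sel st ->
  i \in sel (iter n (step f O p yW rk budget alpha b) st) ->
  i \in sel (iter n (step f O p yW rk budget alpha (update_bid b i bi')) st).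
Proof.
move=> fm fs hp inj bud al bp bi0 bile.
elim=> [|n ih] st s0 ni; first by rewrite /= (negPf ni).
move=> hin.
have [fb1 fb2] := @future _ _ _ f O p yW rk budget alpha b i fm fs hp bud al bp _ _ s0 ni hin.
move: hin; rewrite !iterSr.
set b' := update_bid b i bi'.
set F := step f O p yW rk budget alpha b.
set F' := step f O p yW rk budget alpha b'.
have sumeq : \sum_(s in sel st) b' s = \sum_(s in sel st) b s.
  apply: eq_bigr => s sS; rewrite /b' /update_bid; case: eqP => // e.
  by move: ni; rewrite -e sS.
have b'i : b' i = bi' by rewrite /b' /update_bid eqxx.
have b'v : forall v, v != i -> b' v = b v by move=> v /negPf h; rewrite /b' /update_bid h.
case hs: (stopped st).
  have -> : F st = st by rewrite /F /step hs.
  have -> : F' st = st by rewrite /F' /step hs.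
  exact: ih.
case ha: (argmax_user f O p yW rk b (sel st) (Defs.rem st)) => [w|]; last first.
  by rewrite /F /step hs ha iter_stopped //= (negPf ni).
have := ha; rewrite /argmax_user; case: pickP => [w0 /andP[win /forallP hw] [ew]|//].
subst w0.
set r := Defs.ratio f O p yW b (sel st).
set r' := Defs.ratio f O p yW b' (sel st).
have hr_eq : forall v, v != i -> r' v = r v by move=> v h; rewrite /r /r' /Defs.ratio b'v.
have hr_le : forall v, r v <= r' v.
  move=> v; case: (eqVneq v i) => [->|h]; last by rewrite hr_eq.
  rewrite /r /r' /Defs.ratio b'i; apply: ler_wpM2l; first exact: cg_ge0.
  by rewrite lef_pV2 ?posrE.
have hu : forall v, v \in Defs.rem st -> BB r rk w v by move=> v vin; exact: (implyP (hw v) vin).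
have allw : forall v, v \in Defs.rem st -> v != i -> BB r' rk w v.
  move=> v vin vi; apply: BB_up (hr_le w) (hr_eq v vi) (hu v vin).
case ha': (argmax_user f O p yW rk b' (sel st) (Defs.rem st)) => [u|]; last first.
  move: ha'; rewrite /argmax_user; case: pickP => // nopick _.
  case hi: (i \in Defs.rem st); last first.
    have := nopick w; rewrite win /= => /negbT/negP; case; apply/forallP => v.
    apply/implyP => vin; apply: allw => //; apply/eqP => e; by move: vin; rewrite e hi.
  case hwi: (BB r' rk w i).
    have := nopick w; rewrite win /= => /negbT/negP; case; apply/forallP => v.
    apply/implyP => vin; case: (eqVneq v i) => [->|vi]; [exact: hwi | exact: allw].
  have hiw : BB r' rk i w by move: (BB_total r' rk w i); rewrite hwi.
  have := nopick i; rewrite hi /= => /negbT/negP; case; apply/forallP => v.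
  apply/implyP => vin; case: (eqVneq v i) => [->|vi]; first exact: BB_refl.
  exact: BB_trans hiw (allw v vin vi).
have := ha'; rewrite /argmax_user; case: pickP => [u0 /andP[uin /forallP hu'] [eu]|//].
subst u0.
have hu2 : forall v, v \in Defs.rem st -> BB r' rk u v by move=> v vin; exact: (implyP (hu' v) vin).
case: (eqVneq u i) => [eui|nui].
  subst u => _.
  have t1 : \sum_(s in sel st) b' s + b' i <= budget.
    by rewrite sumeq b'i; apply: le_trans fb1; rewrite lerD2l.
  have t2 : b' i <= budget / alpha * (cond_gain f O p yW i (sel st) / (sumD st + cond_gain f O p yW i (sel st))).
    by rewrite b'i; apply: le_trans fb2.
  have -> : F' st = State (i |: sel st) (sumD st + cond_gain f O p yW i (sel st)) (Defs.rem st :\ i) false.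
    by rewrite /F' /step hs ha' t1 t2.
  apply: (subsetP iter_sel_sub); by rewrite /= setU11.
have euw : u = w.
  apply: (BB_anti inj).
    apply: (BB_down (hr_le w) (hr_eq u nui)); exact: hu2.
  exact: hu.
subst u.
have -> : F' st = F st.
  by rewrite /F' /F /step hs ha ha' sumeq (b'v w nui).
move=> hin.
case: (boolP (i \in sel (F st))) => [h|h].
  exact: (subsetP iter_sel_sub).
apply: ih h hin.
apply: le_trans s0 _; exact: step_sumD.
Qed.

Theorem lemma1 (R : realFieldType) (V W : finType)
  (f : {set V} -> R) (O : {set {set V}}) (p : W -> {set V} -> R)
  (yW : W -> {set V}) (rk : W -> nat) (budget alpha : R) :
  set_fun_nonneg f -> set_fun_monotone f -> set_fun_submodular f ->
  is_profile_distr O p ->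
  (forall w, yW w \in O) ->
  injective rk ->
  0 < budget -> 1 <= alpha ->
  forall (i : W) (b : W -> R) (bi' : R),
    (forall w, 0 < b w) -> 0 < bi' -> bi' <= b i ->
    i \in seqtgreedy_selected f O p yW rk budget alpha b ->
    i \in seqtgreedy_selected f O p yW rk budget alpha (update_bid b i bi').
Proof.
move=> _ fm fs hp _ inj bud al i b bi' bp bi0 bile hin.
rewrite /seqtgreedy_selected in hin *.
have ni : i \notin sel (State set0 (0:R) [set: W] false) by rewrite /= in_set0.
have K := (@key _ _ _ f O p yW rk budget alpha b i bi' fm fs hp inj bud al bp bi0 bile _ (State set0 (0:R) [set: W] false) (lexx (0:R)) ni). exact: (K _ hin).
Qed.
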